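(* For every integer $n\ge 0$, \[ d_{n,q}(x)=\sum_{l=0}^{n}\Bigg(\sum_{m=l}^{n}(-1)^m\frac{2^{2m-l}}{m!}S_1(m,l)\,d_{n-m,q}\Bigg)x^l. \]
   Context: Let $p$ be a fixed odd prime, $\mathbb{C}_p$ the completion of the algebraic closure of $\mathbb{Q}_p$, with $|p|_p=1/p$. Let $q\in\mathbb{C}_p$ with $|1-q|_p<p^{-1/(p-1)}$, and $\log$ the $p$-adic logarithm. The numbers $d_{n,q}$ are defined by \[ \frac{q-1+\frac{q-1}{\log q}\cdot\frac12\log(1-4t)}{q\sqrt{1-4t}-1}=\sum_{n=0}^{\infty}d_{n,q}t^n, \] and the ($q$-analogue) Catalan–Daehee polynomials $d_{n,q}(x)$ are defined by \[ \frac{q-1+\frac{q-1}{\log q}\cdot\frac12\log(1-4t)}{q\sqrt{1-4t}-1}(1-4t)^{x/2}=\sum_{n=0}^{\infty}d_{n,q}(x)t^n, \] for $t\in\mathbb{C}_p$ with $|t|_p<p^{-1/(p-1)}$, where $(1-4t)^{x/2}=\exp\big(\tfrac{x}{2}\log(1-4t)\big)$. $S_1(m,l)$ are the Stirling numbers of the first kind: $(x)_m=\sum_{l=0}^m S_1(m,l)x^l$, with $(x)_0=1$, $(x)_m=x(x-1)\cdots(x-m+1)$. *)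

(* Defs.v *)
(* Formal power series over a field K of characteristic 0,
   represented by their coefficient sequences nat -> K. *)
From HB Require Import structures.
From mathcomp Require Import all_boot all_order all_algebra.
Set Implicit Arguments. Unset Strict Implicit. Unset Printing Implicit Defensive.
Import Order.TTheory GRing.Theory Num.Theory.
Local Open Scope ring_scope.

Section FPS.
Variable K : fieldType.

Definition oneS : nat -> K := fun n => (n == 0%N)%:R.

Definition mulS (f g : nat -> K) : nat -> K :=
  fun n => \sum_(k < n.+1) f k * g (n - k)%N.

Fixpoint powS (f : nat -> K) (j : nat) : nat -> K :=
  match j with 0%N => oneS | j'.+1 => mulS f (powS f j') end.

(* formal exponential exp(f) = sum_j f^j / j!, for f with f 0 = 0 *)
Definition expS (f : nat -> K) : nat -> K :=
  fun n => \sum_(j < n.+1) (j`!%:R)^-1 * powS f j n.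

(* formal log(1 - 4t) = - sum_{k>=1} (4t)^k / k *)
Definition log1m4t : nat -> K :=
  fun n => if n == 0%N then 0 else - ((4 ^ n)%:R / n%:R).

(* (1 - 4t)^a := exp(a log(1 - 4t)) *)
Definition pow1m4t (a : K) : nat -> K := expS (fun n => a * log1m4t n).

(* formal inverse of g with g 0 != 0:  g^{-1} = g0^{-1} sum_j u^j,
   u = 1 - g / g0 *)
Definition invS (g : nat -> K) : nat -> K :=
  fun n => (g 0%N)^-1 *
    \sum_(j < n.+1) powS (fun k => if k == 0%N then 0 else - (g k / g 0%N)) j n.

(* numerator  q - 1 + (q-1)/log q * 1/2 * log(1-4t), with lq standing for log q *)
Definition cdnum (q lq : K) : nat -> K :=
  fun n => (q - 1) * oneS n + (q - 1) / lq * 2^-1 * log1m4t n.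

(* denominator  q * sqrt(1-4t) - 1 *)
Definition cdden (q : K) : nat -> K :=
  fun n => q * pow1m4t (2^-1) n - oneS n.

Definition dq (q lq : K) (n : nat) : K := mulS (cdnum q lq) (invS (cdden q)) n.

Definition dqx (q lq x : K) (n : nat) : K :=
  mulS (mulS (cdnum q lq) (invS (cdden q))) (pow1m4t (x / 2)) n.

End FPS.

(* signed Stirling numbers of the first kind: (x)_m = sum_l S1 m l x^l *)
Definition S1 (m l : nat) : int := (\prod_(i < m) ('X - (i%:R)%:P) : {poly int})`_l.

(* Main.v *)
Require Import Defs.
From HB Require Import structures.
From mathcomp Require Import all_boot all_order all_algebra zify ring.
Import Order.TTheory GRing.Theory Num.Theory.
Local Open Scope ring_scope.

Section S.
Variable K : fieldType.
Implicit Types (f g : nat -> K).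

Definition tp f N : {poly K} := \poly_(i < N) f i.

Lemma mulS_coef f g N n : (n < N)%N -> mulS f g n = (tp f N * tp g N)`_n.
Proof.
move=> hn; rewrite coefM; apply: eq_bigr => i _.
rewrite /tp !coef_poly (leq_ltn_trans (ltnSE (ltn_ord i)) hn).
by rewrite (leq_ltn_trans (leq_subr _ _) hn).
Qed.

Lemma powS_coef f N j n : (n < N)%N -> powS f j n = (tp f N ^+ j)`_n.
Proof.
elim: j n => [|j IH] n hn /=; first by rewrite expr0 coef1.
rewrite exprS coefM /mulS; apply: eq_bigr => i _.
rewrite IH; last by rewrite (leq_ltn_trans (leq_subr _ _) hn).
by rewrite /tp coef_poly (leq_ltn_trans (ltnSE (ltn_ord i)) hn).
Qed.

Lemma powS_low f j n : f 0%N = 0 -> (n < j)%N -> powS f j n = 0.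
Proof.
move=> f0; elim: j n => [|j IH] n //= hn.
rewrite /mulS big1 // => i _.
case: (posnP i) => [->|ip]; first by rewrite f0 mul0r.
rewrite IH ?mulr0 //.
case: i ip => i /= hi ip. rewrite ltnS in hn. lia.
Qed.

Definition Gs f N M : {poly K} := \sum_(j < M) (j`!%:R)^-1 *: tp f N ^+ j.

Lemma Gs_coef f N M n : f 0%N = 0 -> (n < N)%N -> (n < M)%N ->
  (Gs f N M)`_n = expS f n.
Proof.
move=> f0 hN hM; rewrite /Gs coef_sum /expS.
rewrite (big_ord_widen _ (fun j => (j`!%:R)^-1 * powS f j n) hM).
rewrite [RHS]big_mkcond /=; apply: eq_bigr => i _.
rewrite coefZ -powS_coef //; case: ifP => // /negbT; rewrite -leqNgt => h.
by rewrite powS_low ?mulr0.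
Qed.
Hypothesis HK : [pchar K] =i pred0.
Lemma natS_neq0 n : (n.+1)%:R != 0 :> K.
Proof. by rewrite (pcharf0P _).1. Qed.

Lemma Gs_deriv f N M : (Gs f N M.+1)^`() = (tp f N)^`() * Gs f N M.
Proof.
rewrite /Gs linear_sum big_ord_recl /= expr0 derivZ derivC scaler0 add0r.
rewrite mulr_sumr; apply: eq_bigr => i _.
rewrite derivZ deriv_exp /= -scalerAr -scaler_nat scalerA; congr (_ *: _).
rewrite factS natrM invfM.
rewrite /bump /= add1n mulrAC mulVf ?mul1r // ?natS_neq0.
all: done.
Qed.

Lemma expS_ode f n : f 0%N = 0 ->
  expS f n.+1 *+ n.+1 = \sum_(i < n.+1) (f i.+1 *+ i.+1) * expS f (n - i).
Proof.
move=> f0; have := congr1 (fun p : {poly K} => p`_n) (Gs_deriv f n.+2 n.+1).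
rewrite /= coef_deriv Gs_coef // coefM => ->; apply: eq_bigr => i _.
rewrite coef_deriv /tp coef_poly.
have hi := ltn_ord i; rewrite ifT; last by lia.
rewrite Gs_coef //; lia.
Qed.

Definition E (a : K) := pow1m4t a.

Lemma E0 a : E a 0%N = 1.
Proof. by rewrite /E /pow1m4t /expS big_ord1 /= fact0 invr1 mul1r. Qed.

Lemma E_rec a n : E a n.+1 *+ n.+1 = - (4 * a) * \sum_(i < n.+1) 4 ^+ i * E a (n - i).
Proof.
rewrite /E /pow1m4t expS_ode; last by rewrite /log1m4t /= mulr0.
rewrite mulr_sumr; apply: eq_bigr => i _.
rewrite /log1m4t /= natrX -[_ *+ i.+1]mulr_natr; set e := expS _ _.
clearbody e; rewrite exprS; field; by rewrite -(natrD _ 1 i) natS_neq0.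
Qed.

Lemma E_rec1 a n : E a n.+1 *+ n.+1 = 4 * (n%:R - a) * E a n.
Proof.
case: n => [|n].
  by rewrite E_rec big_ord1 subnn E0; ring.
rewrite E_rec big_ord_recl /= expr0 mul1r subn0.
have -> : \sum_(i < n.+1) 4 ^+ (bump 0 i) * E a (n.+1 - bump 0 i) =
   4 * \sum_(i < n.+1) 4 ^+ i * E a (n - i).
  rewrite mulr_sumr; apply: eq_bigr => i _; rewrite /bump /= add1n subSS exprS; ring.
have h := E_rec a n.
set T := \sum_(_ < _) _ in h *.
have -> : - (4 * a) * (E a n.+1 + 4 * T) = - (4 * a) * E a n.+1 + 4 * (- (4 * a) * T) by ring.
rewrite -h -mulr_natr; ring.
Qed.
Lemma E_closed a m :
  E a m = (-4) ^+ m / (m`!)%:R * \prod_(i < m) (a - i%:R).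
Proof.
elim: m => [|m IH]; first by rewrite E0 big_ord0 fact0 expr0 invr1 !mulr1.
have h := E_rec1 a m; rewrite -[E a m.+1 *+ _]mulr_natr in h.
have -> : E a m.+1 = 4 * (m%:R - a) * E a m / (m.+1)%:R.
  by rewrite -h mulfK ?natS_neq0.
rewrite IH big_ord_recr /= factS natrM exprS.
set P := \prod_(_ < _) _.
field; by rewrite -(natrD _ 1 m) natS_neq0 andbT (pcharf0P _).1 // -lt0n fact_gt0.
Qed.
Lemma S1_zero m l : (m < l)%N -> S1 m l = 0.
Proof.
move=> h; rewrite /S1 nth_default //.
by rewrite size_prod_XsubC /index_enum -enumT size_enum_ord.
Qed.

Lemma S1_prod (y : K) m N : (m < N)%N ->
  \prod_(i < m) (y - i%:R) = \sum_(l < N) (S1 m l)%:~R * y ^+ l.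
Proof.
move=> hN.
pose P := (\prod_(i < m) ('X - (i%:R)%:P) : {poly int}).
have hP : map_poly intr P = \prod_(i < m) ('X - (i%:R)%:P) :> {poly K}.
  rewrite rmorph_prod; apply: eq_bigr => i _; by rewrite /= map_polyXsubC /= rmorph_nat.
have := congr1 (horner^~ y) hP.
rewrite /= horner_prod.
under eq_bigr do rewrite hornerXsubC.
move=> <-; rewrite (horner_coef_wide _ (n:=N)).
  by apply: eq_bigr => i _; rewrite coef_map.
by rewrite hP size_prod_XsubC /index_enum -enumT size_enum_ord.
Qed.
Lemma two_neq0 : 2 != 0 :> K.
Proof. exact: (natS_neq0 1). Qed.

Lemma term_eq (x d : K) m l :
  (-4) ^+ m / (m`!)%:R * ((S1 m l)%:~R * (x / 2) ^+ l) * d =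
  (-1) ^+ m * (2 ^+ (2 * m - l)%N / (m`!)%:R) * (S1 m l)%:~R * d * x ^+ l.
Proof.
case: (leqP l m) => hlm; last by rewrite S1_zero // mulr0z !(mulr0, mul0r).
have e1 : (-4 : K) ^+ m = (-1) ^+ m * 2 ^+ (2 * m).
  have -> : (-4 : K) = -1 * 2 ^+ 2 by ring.
  by rewrite exprM -exprMn.
have e2 : (2 : K) ^+ (2 * m) = 2 ^+ (2 * m - l) * 2 ^+ l.
  by rewrite -exprD subnK //; lia.
rewrite e1 e2 exprMn exprVn.
have hC : (2 : K) ^+ l != 0 by rewrite expf_neq0 // two_neq0.
move: hC; set C := (2 : K) ^+ l; set B := 2 ^+ _; move=> hC.
field. all: try by rewrite hC andbT (pcharf0P _).1 // -lt0n fact_gt0.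

Qed.
End S.

Lemma helper (K : fieldType) N (c d : K) (F : 'I_N -> K) :
  c * (\sum_i F i) * d = \sum_i c * F i * d.
Proof. by rewrite mulr_sumr mulr_suml. Qed.

Theorem theorem5 (K : fieldType) (HK : [pchar K] =i pred0)
  (q lq x : K) (hq : q != 1) (hlq : lq != 0) (n : nat) :
  dqx q lq x n =
  \sum_(0 <= l < n.+1)
     (\sum_(l <= m < n.+1)
         (-1) ^+ m * (2 ^+ (2 * m - l)%N / (m`!)%:R) * (S1 m l)%:~R * dq q lq (n - m)%N)
     * x ^+ l.
Proof.
have -> : dqx q lq x n = \sum_(k < n.+1) dq q lq k * pow1m4t (x / 2) (n - k) by [].
rewrite (reindex_inj rev_ord_inj) /=.
have -> : \sum_(j < n.+1) dq q lq (n.+1 - j.+1) * pow1m4t (x / 2) (n - (n.+1 - j.+1)) =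
  \sum_(m < n.+1) \sum_(l < n.+1) (-4) ^+ m / (m`!)%:R * ((S1 m l)%:~R * (x / 2) ^+ l) * dq q lq (n - m).
  apply: eq_bigr => j _; rewrite subSS subKn; last by rewrite -ltnS.
  have := @E_closed K HK (x / 2) j; rewrite /E => ->.
  rewrite mulrC (@S1_prod K (x / 2) _ _ (ltn_ord j)). exact: helper.
rewrite exchange_big [RHS]big_mkord; apply: eq_bigr => l _ /=.
rewrite -(big_mkord xpredT (fun m => (-4) ^+ m / (m`!)%:R * ((S1 m l)%:~R * (x / 2) ^+ l) * dq q lq (n - m))).
rewrite (@big_cat_nat _ _ _ l 0) //=; last by apply: ltnW.
rewrite big1_seq ?add0r; last first.
  move=> m; rewrite mem_index_iota => /andP [_ hm].
  by rewrite S1_zero // mulr0z mul0r mulr0 mul0r.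
rewrite mulr_suml; apply: eq_big_nat => m hm.
exact: term_eq.
Qed.
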